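(* Let $X$ be a Banach space. (a) If $X$ is $(1,k)$-$\mathrm{SQ}_1$ for some $k\in(0,1]$ (in particular, if $X$ is $(1,<1)$-$\mathrm{SQ}_{<\aleph_0}$), then the closed unit ball $B_X$ has no extreme points. (b) If $X$ is $(k,1)$-$\mathrm{SQ}_1$ for some $k\in(0,1]$ (in particular, if $X$ is $(<1,1)$-$\mathrm{SQ}_{<\aleph_0}$), then $X$ is not strictly convex.
   Context: For $r,s\in(0,1]$: $X$ is $(r,s)$-$\mathrm{SQ}_{1}$ if for every set $A\subset S_X$ with $|A|\le 1$ there exists $y\in S_X$ with $\|rx\pm sy\|\le 1$ for all $x\in A$; $X$ is $(r,s)$-$\mathrm{SQ}_{<\aleph_0}$ if the same holds for every finite $A\subset S_X$. $X$ is $(1,<1)$-$\mathrm{SQ}_{<\aleph_0}$ if it is $(1,t)$-$\mathrm{SQ}_{<\aleph_0}$ for every $t\in(0,1)$, and $(<1,1)$-$\mathrm{SQ}_{<\aleph_0}$ if it is $(t,1)$-$\mathrm{SQ}_{<\aleph_0}$ for every $t\in(0,1)$. *)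

(* Defs.v *)
From HB Require Import structures.
From mathcomp Require Import all_boot all_order all_algebra.
From mathcomp Require Import all_classical all_reals all_analysis.
Set Implicit Arguments. Unset Strict Implicit. Unset Printing Implicit Defensive.
Import Order.TTheory GRing.Theory Num.Theory.
Import numFieldNormedType.Exports.
Local Open Scope classical_set_scope.
Local Open Scope ring_scope.

Section Defs.
Context {R : realType} {X : normedModType R}.

Definition unit_sphere : set X := [set x | `|x| = 1].
Definition closed_unit_ball : set X := [set x | `|x| <= 1].

Definition SQ_for (adm : set X -> Prop) (r s : R) : Prop :=
  forall A : set X, A `<=` unit_sphere -> adm A ->
    exists2 y, unit_sphere y &
      forall x, A x -> `|r *: x + s *: y| <= 1 /\ `|r *: x - s *: y| <= 1.

Definition at_most_one (A : set X) : Prop := forall a b, A a -> A b -> a = b.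

Definition SQ_1 (r s : R) : Prop := SQ_for at_most_one r s.
Definition SQ_finite (r s : R) : Prop := SQ_for (@finite_set X) r s.

Definition SQ_finite_1_lt1 : Prop := forall t, 0 < t < 1 -> SQ_finite 1 t.
Definition SQ_finite_lt1_1 : Prop := forall t, 0 < t < 1 -> SQ_finite t 1.

Definition extreme_point (C : set X) (x : X) : Prop :=
  C x /\ forall (y z : X) (t : R), C y -> C z -> 0 < t < 1 ->
    x = t *: y + (1 - t) *: z -> y = z.

Definition strictly_convex : Prop :=
  forall x y : X, `|x| = 1 -> `|y| = 1 -> x <> y -> `|2^-1 *: (x + y)| < 1.

End Defs.

(* Main.v *)
Require Import Defs.
From mathcomp Require Import all_boot all_order all_algebra.
From mathcomp Require Import all_classical all_reals all_analysis.
Import Order.TTheory GRing.Theory Num.Theory.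
Import numFieldNormedType.Exports.
Local Open Scope classical_set_scope.
Local Open Scope ring_scope.

Lemma no_ext (R : realType) (X : normedModType R) (k : R) : 0 < k ->
  (exists y : X, `|y| = 1) ->
  (forall x : X, `|x| = 1 -> exists2 y : X, `|y| = 1 &
       `|x + k *: y| <= 1 /\ `|x - k *: y| <= 1) ->
  forall x : X, ~ extreme_point closed_unit_ball x.
Proof.
move=> k0 [y0 y01] H x [xB xE].
have [v [vn0 [v1 v2]]] : exists v : X, v != 0 /\ `|x + v| <= 1 /\ `|x - v| <= 1.
  have : `|x| <= 1 := xB.
  rewrite le_eqVlt => /orP[/eqP x1|x1].
    have [y y1 [h1 h2]] := H x x1.
    exists (k *: y); split => //.
    by rewrite scaler_eq0 negb_or gt_eqF //= -normr_eq0 y1 oner_neq0.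
  exists ((1 - `|x|) *: y0); split.
    by rewrite scaler_eq0 negb_or subr_eq0 gt_eqF //= -normr_eq0 y01 oner_neq0.
  split.
    apply: (le_trans (ler_normD _ _)).
    have hx : 0 <= 1 - `|x| by rewrite subr_ge0 ltW.
    by rewrite normrZ y01 mulr1 ger0_norm // addrC subrK.
  apply: (le_trans (ler_normB _ _)).
  have hx : 0 <= 1 - `|x| by rewrite subr_ge0 ltW.
  by rewrite normrZ y01 mulr1 ger0_norm // addrC subrK.
have := xE (x + v) (x - v) (2^-1) v1 v2.
have h2 : 0 < (2^-1 : R) < 1.
  by apply/andP; split; rewrite ?invr_gt0 ?invf_lt1 ?ltr1n.
move=> /(_ h2).
have -> : 1 - (2^-1 : R) = 2^-1.
  by rewrite {1}(splitr 1) mul1r addrK.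
have e : x = 2^-1 *: (x + v) + 2^-1 *: (x - v).
  by rewrite -scalerDr addrACA subrr addr0 -mulr2n -(scaler_nat 2 x) scalerA mulVf ?pnatr_eq0 // scale1r.
move=> /(_ e) h.
have : (x + v) - (x - v) = 0 by rewrite h subrr.
rewrite opprB addrAC addrCA subrr addr0 -mulr2n -(scaler_nat 2 v) => /eqP.
by rewrite scaler_eq0 pnatr_eq0 /= (negbTE vn0).
Qed.

Lemma not_sc (R : realType) (X : normedModType R) (k : R) (u y : X) : 0 < k ->
  `|u| = 1 -> `|y| = 1 -> `|k *: u + y| <= 1 -> `|k *: u - y| <= 1 ->
  ~ @strictly_convex R X.
Proof.
move=> k0 u1 y1 h1 h2 sc.
set a := y + k *: u; set b := y - k *: u.
have ha : `|a| <= 1 by rewrite /a addrC.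
have hb : `|b| <= 1 by rewrite /b distrC.
have hab : a + b = y *+ 2 by rewrite /a /b addrACA subrr addr0 mulr2n.
have t : 2 <= `|a| + `|b|.
  by apply: le_trans (ler_normD _ _); rewrite hab normrMn y1.
have ea : `|a| = 1 by apply/eqP; rewrite eq_le ha /= -(lerD2r `|b|); apply: le_trans t; rewrite -[2]/(1+1) lerD2l.
have eb : `|b| = 1 by apply/eqP; rewrite eq_le hb /= -(lerD2l `|a|); apply: le_trans t; rewrite -[2]/(1+1) lerD2r.
have nab : a <> b.
  move=> e; have : a - b = 0 by rewrite e subrr.
  rewrite /a /b opprB addrAC addrCA subrr addr0 -mulr2n -(scaler_nat 2) scalerA => /eqP.
  by rewrite scaler_eq0 mulf_eq0 pnatr_eq0 (gt_eqF k0) /= -normr_eq0 u1 oner_eq0.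
have := sc a b ea eb nab.
rewrite hab -(scaler_nat 2 y) scalerA mulVf ?pnatr_eq0 // scale1r y1 ltxx //.
Qed.

Theorem lemma6p5 (R : realType) (X : completeNormedModType R) :
  (* (a) *)
  ((exists k : R, 0 < k <= 1 /\ @SQ_1 R X 1 k) ->
     forall x : X, ~ extreme_point closed_unit_ball x) /\
  (@SQ_finite_1_lt1 R X -> forall x : X, ~ extreme_point closed_unit_ball x) /\
  (* (b) *)
  ((exists k : R, 0 < k <= 1 /\ @SQ_1 R X k 1) -> ~ @strictly_convex R X) /\
  (@SQ_finite_lt1_1 R X -> ~ @strictly_convex R X).
Proof.
have h2 : 0 < (2^-1 : R) < 1.
  by apply/andP; split; rewrite ?invr_gt0 ?invf_lt1 ?ltr1n.
have am0 : @at_most_one R X set0 by [].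
have am1 : forall x : X, at_most_one [set x] by move=> x a b -> ->.
have s0 : set0 `<=` @unit_sphere R X by [].
have s1 : forall x : X, `|x| = 1 -> [set x] `<=` unit_sphere by move=> x x1 z ->.
split; [|split; [|split]].
- move=> [k [/andP[k0 _] H]].
  have [y0 y01 _] := H set0 s0 am0.
  apply: (@no_ext R X _ k0); first by exists y0.
  move=> x x1; have [y y1 hy] := H [set x] (s1 x x1) (am1 x).
  by exists y => //; have := hy x erefl; rewrite scale1r.
- move=> H; have {}H := H _ h2.
  have k0 : 0 < (2^-1 : R) by case/andP: h2.
  have [y0 y01 _] := H set0 s0 (finite_set0 _).
  apply: (@no_ext R X _ k0); first by exists y0.
  move=> x x1; have [y y1 hy] := H [set x] (s1 x x1) (finite_set1 x).
  by exists y => //; have := hy x erefl; rewrite scale1r.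
- move=> [k [/andP[k0 _] H]].
  have [u u1 _] := H set0 s0 am0.
  have [y y1 hy] := H [set u] (s1 u u1) (am1 u).
  have [] := hy u erefl; rewrite scale1r => ? ?.
  exact: (@not_sc R X _ u y k0 u1 y1).
- move=> H; have {}H := H _ h2.
  have k0 : 0 < (2^-1 : R) by case/andP: h2.
  have [u u1 _] := H set0 s0 (finite_set0 _).
  have [y y1 hy] := H [set u] (s1 u u1) (finite_set1 u).
  have [] := hy u erefl; rewrite scale1r => ? ?.
  exact: (@not_sc R X _ u y k0 u1 y1).
Qed.
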